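(* Let $G$ be a group and $\mathcal{F}$ a family of finite subgroups of $G$. The orbit category $\mathrm{Or}(G,\mathcal{F})$ satisfies the unique factorisation property if and only if every member of $\mathcal{F}$ is a cyclic group of prime power order (different primes may occur for different members).
   Context: A family of subgroups is a non-empty set of subgroups closed under conjugation and passing to subgroups. $\mathrm{Or}(G,\mathcal{F})$ has objects $G/H$, $H\in\mathcal{F}$, and morphisms all $G$-equivariant maps; each morphism $G/H\to G/K$ is $\phi(g)\colon xH\mapsto xg^{-1}K$ for some $g$ with $gHg^{-1}\subseteq K$, unique modulo left multiplication by $K$. A morphism is unfactorisable if it is not an isomorphism and whenever $f=gh$ one of $g,h$ is an isomorphism. A category satisfies the unique factorisation property if for any two chains $x=x_0\xrightarrow{\alpha_1}\cdots\xrightarrow{\alpha_n}x_n=y$ and $x=x'_0\xrightarrow{\alpha'_1}\cdots\xrightarrow{\alpha'_{n'}}x'_{n'}=y$ of unfactorisable morphisms with equal composites, $n=n'$ and there are isomorphisms $h_i\colon x_i\to x'_i$ ($1\le i\le n-1$) with $h_1\alpha_1=\alpha'_1$, $\alpha'_nh_{n-1}=\alpha_n$ and $\alpha'_ih_{i-1}=h_i\alpha_i$ for $2\le i\le n-1$. *)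

(* Defs.v *)
From Stdlib Require Import Arith List ZArith Znumtheory.
Import ListNotations.

Record Group := MkGroup {
  gT :> Type;
  gmul : gT -> gT -> gT;
  gone : gT;
  ginv : gT -> gT;
  gmulA : forall x y z, gmul x (gmul y z) = gmul (gmul x y) z;
  gmul1 : forall x, gmul gone x = x;
  gmulV : forall x, gmul (ginv x) x = gone
}.

Open Scope nat_scope.
Section Defs.
Variable G : Group.

Local Notation "x * y" := (gmul G x y).
Local Notation "1" := (gone G).
Local Notation "x ^-1" := (ginv G x) (at level 3).

Definition subgroup (H : G -> Prop) : Prop :=
  H 1 /\ (forall x y, H x -> H y -> H (x * y)) /\ (forall x, H x -> H x^-1).

Definition subset (A B : G -> Prop) : Prop := forall x, A x -> B x.

Definition conj_set (g : G) (H : G -> Prop) : G -> Prop :=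
  fun y => exists h, H h /\ y = g * h * g^-1.

Definition has_card (H : G -> Prop) (N : nat) : Prop :=
  exists l : list G, NoDup l /\ length l = N /\ (forall x, H x <-> In x l).

Definition finite_set (H : G -> Prop) : Prop := exists N, has_card H N.

Definition family (F : (G -> Prop) -> Prop) : Prop :=
  (exists H, F H) /\
  (forall H, F H -> subgroup H) /\
  (forall H g, F H -> F (conj_set g H)) /\
  (forall H K, F H -> subgroup K -> subset K H -> F K).

Fixpoint gpow (g : G) (m : nat) : G :=
  match m with O => 1 | S m' => g * gpow g m' end.

Definition cyclic_set (H : G -> Prop) : Prop :=
  exists g, forall x, H x <-> exists m, x = gpow g m.

(* cyclic of prime power order p^k (k = 0 allowed: trivial group) *)
Definition cyclic_prime_power (H : G -> Prop) : Prop :=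
  cyclic_set H /\ exists p k, prime (Z.of_nat p) /\ has_card H (p ^ k).

(* Objects: G/H with H in F (identified with H).
   A morphism G/H -> G/K is phi(g) : xH |-> x g^-1 K for some g with
   g H g^-1 <= K; phi(g) = phi(g') iff g' g^-1 in K (g unique mod left
   multiplication by K).  phi(g') o phi(g) = phi(g' g); identity = phi(1). *)
Definition is_mor (H K : G -> Prop) (g : G) : Prop := subset (conj_set g H) K.

(* equality of morphisms with target G/K *)
Definition mor_eq (K : G -> Prop) (g g' : G) : Prop := K (g' * g^-1).

Definition is_iso (H K : G -> Prop) (g : G) : Prop :=
  is_mor H K g /\ exists g', is_mor K H g' /\ mor_eq H (g' * g) 1 /\ mor_eq K (g * g') 1.

Definition unfactorisable (F : (G -> Prop) -> Prop) (H K : G -> Prop) (g : G) : Prop :=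
  is_mor H K g /\ ~ is_iso H K g /\
  forall M a b, F M -> is_mor H M a -> is_mor M K b -> mor_eq K (b * a) g ->
    is_iso H M a \/ is_iso M K b.

(* a chain x_0 -a_1-> x_1 -> ... -a_n-> x_n of unfactorisable morphisms,
   objects xs 0 .. xs n, morphisms as 1 .. as n with as i : xs (i-1) -> xs i *)
Definition unf_chain (F : (G -> Prop) -> Prop) (n : nat)
  (xs : nat -> G -> Prop) (as_ : nat -> G) : Prop :=
  (forall i, i <= n -> F (xs i)) /\
  (forall i, 1 <= i <= n -> unfactorisable F (xs (i - 1)) (xs i) (as_ i)).

Fixpoint composite (as_ : nat -> G) (n : nat) : G :=
  match n with O => 1 | S m => as_ (S m) * composite as_ m end.

(* The isomorphisms h_1..h_{n-1} are
   supplemented by h_0 = h_n = identity (= phi(1)); the condition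
   a'_i h_{i-1} = h_i a_i for 1 <= i <= n then encodes exactly the three
   conditions of the definition. *)
Definition unique_factorisation (F : (G -> Prop) -> Prop) : Prop :=
  forall n xs as_ n' xs' as',
    unf_chain F n xs as_ -> unf_chain F n' xs' as' ->
    xs 0 = xs' 0 -> xs n = xs' n' ->
    mor_eq (xs n) (composite as_ n) (composite as' n') ->
    n = n' /\
    exists h : nat -> G,
      h 0 = 1 /\ h n = 1 /\
      (forall i, 1 <= i <= n - 1 -> is_iso (xs i) (xs' i) (h i)) /\
      (forall i, 1 <= i <= n ->
         mor_eq (xs' i) (as' i * h (i - 1)) (h i * as_ i)).

End Defs.

(* Main.v *)
Require Import Defs.
From Stdlib Require Import Arith List ZArith Znumtheory Lia Classical ClassicalEpsilon FunctionalExtensionality PropExtensionality.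
Import ListNotations.
Open Scope nat_scope.

Section G.
Variable G : Group.
Local Notation "x * y" := (gmul G x y).
Local Notation "1" := (gone G).
Local Notation "x ^-1" := (ginv G x) (at level 3).

Lemma mulrV (x : G) : x * x^-1 = 1.
Proof.
  rewrite <- (gmul1 G (x * x^-1)).
  rewrite <- (gmulV G (x^-1)) at 1.
  rewrite <- gmulA. rewrite (gmulA G (x^-1) x). rewrite gmulV, gmul1. apply gmulV.
Qed.
Lemma mulr1 (x : G) : x * 1 = x.
Proof. rewrite <- (gmulV G x), gmulA, mulrV. apply gmul1. Qed.
Lemma gmulA' (x y z : G) : (x * y) * z = x * (y * z).
Proof. now rewrite gmulA. Qed.
Lemma mulKV (x y : G) : x^-1 * (x * y) = y.
Proof. now rewrite gmulA, gmulV, gmul1. Qed.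
Lemma mulVK (x y : G) : x * (x^-1 * y) = y.
Proof. now rewrite gmulA, mulrV, gmul1. Qed.
Lemma inv_uniq (x y : G) : y * x = 1 -> y = x^-1.
Proof. intro H. rewrite <- (mulr1 y), <- (mulrV x), gmulA, H. apply gmul1. Qed.
Lemma invK (x : G) : (x^-1)^-1 = x.
Proof. symmetry. apply inv_uniq. apply mulrV. Qed.
Lemma invM (x y : G) : (x * y)^-1 = y^-1 * x^-1.
Proof. symmetry. apply inv_uniq. rewrite gmulA', mulKV. apply gmulV. Qed.
Lemma inv1 : 1^-1 = 1.
Proof. symmetry. apply inv_uniq. apply gmul1. Qed.
Lemma gmul1' (x:G) : 1 * x = x. Proof. apply gmul1. Qed.
Lemma gmulV' (x:G) : x^-1 * x = 1. Proof. apply gmulV. Qed.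
Lemma mulKV1 (x y : G) : x * (y^-1 * (y * x^-1)) = 1.
Proof. rewrite mulKV. apply mulrV. Qed.
End G.

Global Hint Rewrite invK invM inv1 gmulA' mulKV mulVK gmul1' gmulV' mulr1 mulrV : grp.
Ltac gsimpl := autorewrite with grp; try reflexivity.

Section Basic.
Variable G : Group.
Local Notation "x * y" := (gmul G x y).
Local Notation "1" := (gone G).
Local Notation "x ^-1" := (ginv G x) (at level 3).

Lemma set_ext (A B : G -> Prop) : (forall x, A x <-> B x) -> A = B.
Proof. intro H. apply functional_extensionality. intro x. apply propositional_extensionality. apply H. Qed.

Lemma conjE (g : G) (S : G -> Prop) : conj_set G g S = (fun y => S (g^-1 * y * g)).
Proof.
  apply set_ext. intro y. split.
  - intros [h [Hh ->]]. replace (g^-1 * (g * h * g^-1) * g) with h by (gsimpl). exact Hh.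
  - intro Hy. exists (g^-1 * y * g). split; [exact Hy|]. gsimpl.
Qed.

Section SG.
Variable H : G -> Prop.
Hypothesis sH : subgroup G H.
Lemma sg1 : H 1. Proof. apply sH. Qed.
Lemma sgM x y : H x -> H y -> H (x * y). Proof. apply sH. Qed.
Lemma sgV x : H x -> H x^-1. Proof. apply sH. Qed.
Lemma sgVr x : H x^-1 -> H x. Proof. intro h. rewrite <- (invK G x). now apply sgV. Qed.
Lemma sg_eq x y : x = y -> H x -> H y. Proof. now intros ->. Qed.
End SG.

Lemma subgroup_conj g S : subgroup G S -> subgroup G (conj_set G g S).
Proof.
  intro sS. rewrite conjE. repeat split.
  - apply (sg_eq S 1); [gsimpl|]. apply sg1; auto.
  - intros x y Hx Hy. apply (sg_eq S ((g^-1 * x * g) * (g^-1 * y * g))); [gsimpl|]. apply sgM; auto.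
  - intros x Hx. apply (sg_eq S ((g^-1 * x * g)^-1)); [gsimpl|]. apply sgV; auto.
Qed.

Lemma subgroup_inter A B : subgroup G A -> subgroup G B -> subgroup G (fun x => A x /\ B x).
Proof.
  intros sA sB. repeat split; try apply sg1; auto; intros; try apply sgM; try apply sgV; tauto.
Qed.

Lemma conj_comp a b S : conj_set G (a * b) S = conj_set G a (conj_set G b S).
Proof. rewrite !conjE. apply set_ext. intro y. replace (b^-1 * (a^-1 * y * a) * b) with ((a*b)^-1 * y * (a*b)) by gsimpl. tauto. Qed.

Lemma conj1 S : conj_set G 1 S = S.
Proof. rewrite conjE. apply set_ext. intro y. replace (1^-1 * y * 1) with y by gsimpl. tauto. Qed.

Lemma conjVK g S : conj_set G g^-1 (conj_set G g S) = S.
Proof. rewrite <- conj_comp, gmulV. apply conj1. Qed.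
Lemma conjKV g S : conj_set G g (conj_set G g^-1 S) = S.
Proof. rewrite <- conj_comp, mulrV. apply conj1. Qed.

Lemma conj_sub g S T : subset G S T -> subset G (conj_set G g S) (conj_set G g T).
Proof. rewrite !conjE. intros h y. apply h. Qed.

Lemma conj_sub_iff g S T : subset G S T <-> subset G (conj_set G g S) (conj_set G g T).
Proof. split. apply conj_sub. intro h. rewrite <- (conjVK g S), <- (conjVK g T). now apply conj_sub. Qed.

Lemma conj_in S g : subgroup G S -> S g -> conj_set G g S = S.
Proof.
  intros sS Hg. rewrite conjE. apply set_ext. intro y. split; intro h.
  - apply (sg_eq S (g * (g^-1 * y * g) * g^-1)); [gsimpl|]. apply sgM; auto. apply sgM; auto. apply sgV; auto.
  - apply sgM; auto. apply sgM; auto. apply sgV; auto.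
Qed.

Lemma is_iso_iff H K g : subgroup G H -> subgroup G K ->
  (is_iso G H K g <-> is_mor G H K g /\ subset G K (conj_set G g H)).
Proof.
  intros sH sK. unfold is_iso, is_mor, mor_eq. split.
  - intros [hm [g' [hm' [e1 e2]]]]. split; auto.
    rewrite conjE. intros y Ky.
    assert (Hu : H (g' * g)). { apply sgVr; auto. eapply sg_eq; [|exact e1]. gsimpl. }
    assert (Hy : H (g' * y * g'^-1)). { apply hm'. rewrite conjE. eapply sg_eq; [|exact Ky]. gsimpl. }
    apply (sg_eq H ((g' * g)^-1 * (g' * y * g'^-1) * (g' * g))); [gsimpl|].
    apply sgM; auto. apply sgM; auto. apply sgV; auto.
  - intros [hm hs]. split; auto. exists (g^-1). split; [|split].
    + rewrite conjE. intros y Ky. rewrite invK in Ky. apply hs in Ky. rewrite conjE in Ky.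
      eapply sg_eq; [|exact Ky]. gsimpl.
    + autorewrite with grp. apply sg1; auto.
    + autorewrite with grp. apply sg1; auto.
Qed.
End Basic.
Section Fin.
Variable G : Group.

Lemma card_le (S T : G -> Prop) a b : subset G S T -> has_card G S a -> has_card G T b -> a <= b.
Proof.
  intros st [l [nl [ll hl]]] [m [nm [lm hm]]]. subst.
  apply NoDup_incl_length; auto. intros x hx. apply hm, st, hl, hx.
Qed.

Lemma card_uniq (S : G -> Prop) a b : has_card G S a -> has_card G S b -> a = b.
Proof. intros h1 h2. apply Nat.le_antisymm; eapply card_le; eauto; intros x; auto. Qed.

Lemma card_lt (S T : G -> Prop) a b : subset G S T -> ~ subset G T S ->
  has_card G S a -> has_card G T b -> a < b.
Proof.
  intros st nts [l [nl [ll hl]]] [m [nm [lm hm]]]. subst.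
  destruct (not_all_ex_not _ _ nts) as [x hx].
  assert (Tx : T x /\ ~ S x) by tauto. destruct Tx as [Tx nSx].
  change (length (x :: l) <= length m). apply NoDup_incl_length.
  - constructor; auto. intro i. apply nSx, hl, i.
  - intros y [<-|hy]. apply hm, Tx. apply hm, st, hl, hy.
Qed.

Lemma card_sub_eq (S T : G -> Prop) a b : subset G S T -> has_card G S a -> has_card G T b -> b <= a ->
  subset G T S.
Proof.
  intros st hs ht le. apply NNPP. intro n. pose proof (card_lt S T a b st n hs ht). lia.
Qed.

Lemma sub_finite (S T : G -> Prop) b : subset G S T -> has_card G T b -> exists a, has_card G S a.
Proof.
  intros st [m [nm [lm hm]]].
  set (l := filter (fun x => if excluded_middle_informative (S x) then true else false) m).
  exists (length l). exists l. split; [apply NoDup_filter; auto|]. split; [reflexivity|].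
  intro x. unfold l. rewrite filter_In. destruct (excluded_middle_informative (S x)) as [e|e]; split; intro h.
  - split; auto. apply hm, st, h.
  - exact e.
  - contradiction.
  - destruct h; discriminate.
Qed.
End Fin.
Section Pow.
Variable G : Group.
Local Notation "x * y" := (gmul G x y).
Local Notation "1" := (gone G).
Local Notation "x ^-1" := (ginv G x) (at level 3).
Local Notation gp := (gpow G).

Lemma gpow_add g a b : gp g (a + b) = gp g a * gp g b.
Proof. induction a; simpl. now rewrite gmul1. now rewrite IHa, gmulA. Qed.

Lemma gpow_comm g a b : gp g a * gp g b = gp g b * gp g a.
Proof. now rewrite <- !gpow_add, Nat.add_comm. Qed.

Lemma gpow_mul g a b : gp g (a * b) = gp (gp g a) b.
Proof.
  induction b; simpl. now rewrite Nat.mul_0_r.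
  rewrite Nat.mul_succ_r, gpow_add, <- IHb. apply gpow_comm.
Qed.

Lemma gpow_one m : gp 1 m = 1.
Proof. induction m; simpl; auto. rewrite IHm. apply gmul1. Qed.

Lemma sg_gpow H g m : subgroup G H -> H g -> H (gp g m).
Proof. intros sH Hg. induction m; simpl. apply sg1; auto. apply sgM; auto. Qed.

Lemma cancel_r a b : a * b = b -> a = 1.
Proof. intro e. rewrite <- (mulr1 G a), <- (mulrV G b), gmulA, e. reflexivity. Qed.

Lemma map_seq_nodup (A : Type) (f : nat -> A) n : forall s,
  (forall i j, s <= i -> i < j -> j < s + n -> f i <> f j) -> NoDup (map f (seq s n)).
Proof.
  induction n; intros s h; simpl. constructor. constructor.
  - rewrite in_map_iff. intros [j [e hj]]. rewrite in_seq in hj. apply (h s j); try lia. auto.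
  - apply IHn. intros i j h1 h2 h3. apply h; lia.
Qed.

Lemma nat_min (P : nat -> Prop) n : P n -> exists m, P m /\ forall k, P k -> m <= k.
Proof.
  revert n. induction n as [n IH] using (well_founded_induction lt_wf). intro Pn.
  destruct (classic (exists k, P k /\ k < n)) as [[k [Pk lk]]|hn].
  - exact (IH k lk Pk).
  - exists n. split; auto. intros k Pk. apply NNPP. intro c. apply hn. exists k. split; auto. lia.
Qed.

Lemma finite_order (H : G -> Prop) N g : (forall m, H (gp g m)) -> has_card G H N ->
  exists e, 0 < e /\ gp g e = 1.
Proof.
  intros hg [l [nl [ll hl]]].
  assert (nd : ~ NoDup (map (gp g) (seq 0 (S N)))).
  { intro nd. apply NoDup_incl_length with (l' := l) in nd.
    - rewrite length_map, length_seq in nd. lia.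
    - intros x hx. apply in_map_iff in hx. destruct hx as [m [<- _]]. apply hl, hg. }
  destruct (classic (exists i j, i < j /\ j < S N /\ gp g i = gp g j)) as [[i [j [h1 [h2 e]]]]|hn].
  - exists (j - i). split. lia.
    apply (cancel_r _ (gp g i)). rewrite <- gpow_add. replace (j - i + i) with j by lia. auto.
  - exfalso. apply nd. apply map_seq_nodup. intros i j _ h2 h3 e. apply hn. exists i, j. split; auto.
Qed.

Definition cyc (g : G) : G -> Prop := fun x => exists m, x = gp g m.

Lemma cyc_subgroup g e : 0 < e -> gp g e = 1 -> subgroup G (cyc g).
Proof.
  intros he ge. split; [|split].
  - exists 0. reflexivity.
  - intros x y [a ->] [b ->]. exists (a + b). now rewrite gpow_add.
  - intros x [a ->]. exists (Nat.mul (Nat.pred e) a). symmetry. apply inv_uniq.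
    rewrite <- gpow_add. replace (Nat.mul (Nat.pred e) a + a) with (Nat.mul e a) by nia.
    rewrite gpow_mul, ge. apply gpow_one.
Qed.

Lemma gpow_mod g e x : gp g e = 1 -> 0 < e -> gp g x = gp g (x mod e).
Proof.
  intros ge he. rewrite (Nat.div_mod_eq x e) at 1. rewrite gpow_add, gpow_mul, ge, gpow_one. apply gmul1.
Qed.

Lemma cyclic_order g N : has_card G (cyc g) N ->
  0 < N /\ gp g N = 1 /\ forall x, gp g x = 1 -> exists t, x = (N * t)%nat.
Proof.
  intro hc.
  destruct (finite_order (cyc g) N g) as [e0 [he0 ge0]]; auto.
  { intro m. exists m. reflexivity. }
  destruct (nat_min (fun e => 0 < e /\ gp g e = 1) e0) as [e [[he ge] emin]]; auto.
  assert (hce : has_card G (cyc g) e).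
  { exists (map (gp g) (seq 0 e)). split; [|split].
    - apply map_seq_nodup. intros i j _ h2 h3 eq. 
      assert (hji : gp g (j - i) = 1).
      { apply (cancel_r _ (gp g i)). rewrite <- gpow_add. replace (j - i + i) with j by lia. auto. }
      assert (hp : 0 < j - i) by lia. specialize (emin (j - i) (conj hp hji)). lia.
    - now rewrite length_map, length_seq.
    - intro x. split.
      + intros [m ->]. rewrite (gpow_mod g e m ge he). apply in_map. apply in_seq.
        pose proof (Nat.mod_upper_bound m e). lia.
      + intro hx. apply in_map_iff in hx. destruct hx as [m [<- _]]. exists m. auto. }
  pose proof (card_uniq G _ _ _ hce hc). subst e.
  split; auto. split; auto. intros x gx.
  rewrite (gpow_mod g N x ge he) in gx.
  destruct (Nat.eq_dec (x mod N) 0) as [z|z].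
  - exists (x / N). rewrite (Nat.div_mod_eq x N) at 1. lia.
  - assert (hp : 0 < x mod N) by lia. specialize (emin (x mod N) (conj hp gx)). pose proof (Nat.mod_upper_bound x N). lia.
Qed.
End Pow.
Lemma nat_Zdiv a b : Nat.divide a b <-> Z.divide (Z.of_nat a) (Z.of_nat b).
Proof.
  split.
  - intros [z ->]. exists (Z.of_nat z). lia.
  - intros [c hc]. destruct (Nat.eq_dec a 0) as [->|na].
    + exists 0. lia.
    + assert (0 <= c)%Z by nia. exists (Z.to_nat c). lia.
Qed.

Lemma prime_ge2 p : prime (Z.of_nat p) -> 2 <= p.
Proof. intro h. apply prime_ge_2 in h. lia. Qed.

Lemma div_prime_pow p k : prime (Z.of_nat p) -> forall m, Nat.divide m (p ^ k) ->
  exists j, j <= k /\ m = p ^ j.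
Proof.
  intro pp. pose proof (prime_ge2 p pp). induction k; intros m hm.
  - exists 0. split; auto. simpl in *. apply Nat.divide_1_r in hm. simpl. auto.
  - destruct (classic (Nat.divide p m)) as [[z ->]|nd].
    + rewrite Nat.pow_succ_r' in hm. rewrite (Nat.mul_comm p (p ^ k)) in hm.
      apply Nat.mul_divide_cancel_r in hm; [|lia].
      destruct (IHk z hm) as [j [hj ->]]. exists (S j). split. lia. simpl. lia.
    + assert (hr : rel_prime (Z.of_nat m) (Z.of_nat p)).
      { apply rel_prime_sym, prime_rel_prime; auto. intro c. apply nd. apply nat_Zdiv. auto. }
      assert (Nat.divide m (p ^ k)).
      { apply nat_Zdiv. apply Gauss with (Z.of_nat p); auto.
        rewrite <- Nat2Z.inj_mul, <- Nat.pow_succ_r'. apply nat_Zdiv; auto. }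
      destruct (IHk m H0) as [j [hj ->]]. exists j. split; auto.
Qed.

Lemma div_prime_pow_cmp p k m m' : prime (Z.of_nat p) -> Nat.divide m (p ^ k) -> Nat.divide m' (p ^ k) ->
  Nat.divide m m' \/ Nat.divide m' m.
Proof.
  intros pp h h'. destruct (div_prime_pow p k pp m h) as [j [_ ->]].
  destruct (div_prime_pow p k pp m' h') as [j' [_ ->]].
  destruct (Nat.le_ge_cases j j').
  - left. exists (p ^ (j' - j)). rewrite <- Nat.pow_add_r. f_equal. lia.
  - right. exists (p ^ (j - j')). rewrite <- Nat.pow_add_r. f_equal. lia.
Qed.

Lemma prime_divisor n : 1 < n -> exists p, prime (Z.of_nat p) /\ Nat.divide p n.
Proof.
  induction n as [n IH] using (well_founded_induction lt_wf). intro hn.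
  destruct (classic (prime (Z.of_nat n))) as [pn|npn].
  - exists n. split; auto. apply Nat.divide_refl.
  - destruct (not_prime_divide (Z.of_nat n) ltac:(lia) npn) as [d [hd dd]].
    assert (ed : d = Z.of_nat (Z.to_nat d)) by lia.
    rewrite ed in dd. apply nat_Zdiv in dd.
    destruct (IH (Z.to_nat d) ltac:(lia) ltac:(lia)) as [p [pp hp]].
    exists p. split; auto. eapply Nat.divide_trans; eauto.
Qed.

Lemma one_prime_pow n : 1 <= n ->
  (forall p q, prime (Z.of_nat p) -> prime (Z.of_nat q) -> Nat.divide p n -> Nat.divide q n -> p = q) ->
  exists p k, prime (Z.of_nat p) /\ n = p ^ k.
Proof.
  induction n as [n IH] using (well_founded_induction lt_wf). intros hn hpq.
  destruct (Nat.eq_dec n 1) as [->|n1].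
  - exists 2, 0. split; auto. apply prime_2.
  - destruct (prime_divisor n ltac:(lia)) as [p [pp [u hu]]].
    pose proof (prime_ge2 p pp).
    destruct (IH u ltac:(nia) ltac:(nia)) as [q [k [pq hq]]].
    { intros a b pa pb da db. apply hpq; auto.
      - rewrite hu. apply Nat.divide_mul_l. auto.
      - rewrite hu. apply Nat.divide_mul_l. auto. }
    destruct k as [|k].
    + exists p, 1. split; auto. simpl in hq. subst. simpl. lia.
    + assert (q = p).
      { apply hpq; auto. rewrite hu, hq. apply Nat.divide_mul_l. rewrite Nat.pow_succ_r'. apply Nat.divide_factor_l.
        rewrite hu. apply Nat.divide_factor_r. }
      subst q. exists p, (S (S k)). split; auto. rewrite hu, hq. simpl. lia.
Qed.

Lemma prime_cancel p q u : prime (Z.of_nat p) -> prime (Z.of_nat q) -> 0 < u ->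
  Nat.divide (p * u) (u * q) -> p = q.
Proof.
  intros pp pq hu d. rewrite (Nat.mul_comm u q) in d. apply Nat.mul_divide_cancel_r in d; [|lia].
  apply nat_Zdiv in d. apply prime_div_prime in d; auto. lia.
Qed.
Section Cyc.
Variable G : Group.
Local Notation "x * y" := (gmul G x y).
Local Notation "1" := (gone G).
Local Notation "x ^-1" := (ginv G x) (at level 3).
Local Notation gp := (gpow G).

Lemma mod_step (A : G -> Prop) g m y : subgroup G A -> 0 < m -> A (gp g m) -> A (gp g y) -> A (gp g (y mod m)).
Proof.
  intros sA hm am ay.
  assert (e : gp g (y mod m) = (gp (gp g m) (y / m))^-1 * gp g y).
  { rewrite (Nat.div_mod_eq y m) at 3. rewrite gpow_add, gpow_mul. gsimpl. }
  rewrite e. apply sgM; auto. apply sgV; auto. apply sg_gpow; auto.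
Qed.

Lemma sub_cyc (A : G -> Prop) g N : subgroup G A -> subset G A (cyc G g) -> has_card G (cyc G g) N ->
  exists m, Nat.divide m N /\ A = cyc G (gp g m).
Proof.
  intros sA sub hc. destruct (cyclic_order G g N hc) as [hN [gN gdiv]].
  assert (AN : A (gp g N)). { rewrite gN. apply sg1; auto. }
  destruct (nat_min (fun m => 0 < m /\ A (gp g m)) N) as [m [[hm am] mmin]]; auto.
  assert (key : forall y, A (gp g y) -> y mod m = 0).
  { intros y ay. pose proof (mod_step A g m y sA hm am ay).
    destruct (Nat.eq_dec (y mod m) 0); auto. assert (hp : 0 < y mod m) by lia.
    specialize (mmin _ (conj hp H)). pose proof (Nat.mod_upper_bound y m). lia. }
  exists m. split.
  - exists (N / m). pose proof (key N AN). rewrite (Nat.div_mod_eq N m) at 1. lia.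
  - apply set_ext. intro x. split.
    + intro ax. destruct (sub x ax) as [y ->]. pose proof (key y ax).
      exists (y / m). rewrite <- gpow_mul. f_equal. rewrite (Nat.div_mod_eq y m) at 1. lia.
    + intros [z ->]. apply sg_gpow; auto.
Qed.

Lemma cpp_cyc H : cyclic_prime_power G H -> exists g p k, prime (Z.of_nat p) /\ H = cyc G g /\ has_card G (cyc G g) (p ^ k).
Proof.
  intros [[g hg] [p [k [pp hc]]]]. assert (e : H = cyc G g) by (apply set_ext; apply hg).
  subst H. exists g, p, k. auto.
Qed.

Lemma cpp_abelian H x y : cyclic_prime_power G H -> H x -> H y -> x * y = y * x.
Proof.
  intros c hx hy. destruct (cpp_cyc H c) as [g [p [k [_ [-> _]]]]].
  destruct hx as [a ->]. destruct hy as [b ->]. apply gpow_comm.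
Qed.

Lemma cpp_total H A B : cyclic_prime_power G H -> subgroup G A -> subgroup G B ->
  subset G A H -> subset G B H -> subset G A B \/ subset G B A.
Proof.
  intros c sA sB hA hB. destruct (cpp_cyc H c) as [g [p [k [pp [-> hc]]]]].
  destruct (sub_cyc A g _ sA hA hc) as [m [dm ->]].
  destruct (sub_cyc B g _ sB hB hc) as [m' [dm' ->]].
  destruct (div_prime_pow_cmp p k m m' pp dm dm') as [[z ->]|[z ->]].
  - right. intros x [y ->]. exists (Nat.mul z y). rewrite <- !gpow_mul. f_equal. lia.
  - left. intros x [y ->]. exists (Nat.mul z y). rewrite <- !gpow_mul. f_equal. lia.
Qed.
End Cyc.
Section Main1.
Variable G : Group.
Local Notation "x * y" := (gmul G x y).
Local Notation "1" := (gone G).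
Local Notation "x ^-1" := (ginv G x) (at level 3).

Lemma sub_antisym (A B : G -> Prop) : subset G A B -> subset G B A -> A = B.
Proof. intros h1 h2. apply set_ext. intro x. split; auto. Qed.

Definition goodT (T : nat -> G -> Prop) n (Y : G -> Prop) : Prop :=
  T n = Y /\ (forall i, i <= n -> subgroup G (T i) /\ subset G (T i) Y) /\
  (forall i, i < n -> subset G (T i) (T (S i)) /\ ~ subset G (T (S i)) (T i) /\
     forall L, subgroup G L -> subset G (T i) L -> subset G L (T (S i)) ->
       subset G L (T i) \/ subset G (T (S i)) L).

Definition total (Y : G -> Prop) : Prop := forall A B, subgroup G A -> subgroup G B ->
  subset G A Y -> subset G B Y -> subset G A B \/ subset G B A.

Lemma chains_eq_aux T T' n n' Y : goodT T n Y -> goodT T' n' Y -> T 0 = T' 0 -> total Y ->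
  forall i, i <= n -> i <= n' -> T i = T' i.
Proof.
  intros [Tn [Ts Tst]] [Tn' [Ts' Tst']] e0 tot.
  induction i as [|i IH]; intros h1 h2; auto.
  specialize (IH ltac:(lia) ltac:(lia)).
  destruct (Tst i ltac:(lia)) as [s1 [ns1 m1]].
  destruct (Tst' i ltac:(lia)) as [s1' [ns1' m1']].
  destruct (Ts (S i) h1) as [g1 y1]. destruct (Ts' (S i) h2) as [g1' y1'].
  destruct (tot _ _ g1 g1' y1 y1') as [c|c].
  - destruct (m1' (T (S i)) g1) as [d|d]; auto.
    + rewrite <- IH. auto.
    + exfalso. apply ns1. rewrite IH. auto.
    + apply sub_antisym; auto.
  - destruct (m1 (T' (S i)) g1') as [d|d]; auto.
    + rewrite IH. auto.
    + exfalso. apply ns1'. rewrite <- IH. auto.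
    + apply sub_antisym; auto.
Qed.

Lemma chains_eq T T' n n' Y : goodT T n Y -> goodT T' n' Y -> T 0 = T' 0 -> total Y ->
  n = n' /\ forall i, i <= n -> T i = T' i.
Proof.
  intros g g' e0 tot.
  pose proof (chains_eq_aux T T' n n' Y g g' e0 tot) as E.
  destruct g as [Tn [Ts Tst]], g' as [Tn' [Ts' Tst']].
  assert (n = n').
  { destruct (Nat.lt_trichotomy n n') as [l|[e|l]]; auto; exfalso.
    - destruct (Tst' n l) as [_ [ns _]]. apply ns. rewrite <- (E n); auto. rewrite Tn. apply Ts'. lia. lia.
    - destruct (Tst n' l) as [_ [ns _]]. apply ns. rewrite (E n'); auto. rewrite Tn'. apply Ts. lia. lia. }
  subst n'. split; auto.
Qed.
End Main1.
Section Main2.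
Variable G : Group.
Local Notation "x * y" := (gmul G x y).
Local Notation "1" := (gone G).
Local Notation "x ^-1" := (ginv G x) (at level 3).
Variable F : (G -> Prop) -> Prop.
Hypothesis fam : family G F.

Lemma fam_sg H : F H -> subgroup G H.
Proof. intro h. apply fam; auto. Qed.
Lemma fam_cl K L : F K -> subgroup G L -> subset G L K -> F L.
Proof. intros. destruct fam as [_ [_ [_ h]]]. eapply h; eauto. Qed.

Lemma unf_strict H K g : subgroup G H -> subgroup G K -> unfactorisable G F H K g ->
  ~ subset G K (conj_set G g H).
Proof. intros sH sK [m [ni _]] s. apply ni. apply is_iso_iff; auto. Qed.

Lemma unf_max H K g : F K -> subgroup G H -> unfactorisable G F H K g ->
  forall L, subgroup G L -> subset G (conj_set G g H) L -> subset G L K ->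
  subset G L (conj_set G g H) \/ subset G K L.
Proof.
  intros FK sH [m [ni fa]] L sL s1 s2.
  assert (FL : F L) by (eapply fam_cl; eauto).
  destruct (fa L g 1 FL s1) as [i|i].
  - unfold is_mor. rewrite conj1. auto.
  - unfold mor_eq. autorewrite with grp. apply sg1. apply fam_sg; auto.
  - left. apply is_iso_iff in i; auto. apply i.
  - right. apply is_iso_iff in i; auto. destruct i as [_ i]. rewrite conj1 in i. auto.
    apply fam_sg; auto.
Qed.

Definition Tc (as_ : nat -> G) n (xs : nat -> G -> Prop) i :=
  conj_set G (composite G as_ n * (composite G as_ i)^-1) (xs i).

Lemma chain_good n xs as_ : unf_chain G F n xs as_ -> goodT G (Tc as_ n xs) n (xs n).
Proof.
  intros [hF hU].
  assert (sx : forall i, i <= n -> subgroup G (xs i)) by (intros; apply fam_sg; auto).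
  assert (Tn : Tc as_ n xs n = xs n). { unfold Tc. rewrite mulrV. apply conj1. }
  assert (step : forall i, i < n ->
    Tc as_ n xs i = conj_set G (composite G as_ n * (composite G as_ (S i))^-1) (conj_set G (as_ (S i)) (xs i))).
  { intros i hi. unfold Tc. rewrite <- conj_comp. f_equal. simpl. gsimpl. }
  assert (U : forall i, i < n -> unfactorisable G F (xs i) (xs (S i)) (as_ (S i))).
  { intros i hi. specialize (hU (S i) ltac:(lia)). replace (S i - 1) with i in hU by lia. auto. }
  assert (sub1 : forall i, i < n -> subset G (Tc as_ n xs i) (Tc as_ n xs (S i))).
  { intros i hi. rewrite (step i hi). unfold Tc. apply conj_sub. apply (U i hi). }
  split; [auto|split; [|]].
  - assert (down : forall j, j <= n -> subset G (Tc as_ n xs (n - j)) (xs n)).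
    { induction j; intro hj. rewrite Nat.sub_0_r, Tn. intros x h; auto.
      intros x hx. apply IHj. lia. replace (n - j) with (S (n - S j)) by lia. apply sub1. lia. auto. }
    intros i hi. split. unfold Tc. apply subgroup_conj. auto.
    replace i with (n - (n - i)) by lia. apply down. lia.
  - intros i hi. split; [auto|split].
    + rewrite (step i hi). unfold Tc. intro c. apply <- conj_sub_iff in c.
      eapply unf_strict; [| | apply (U i hi) | exact c]; apply sx; lia.
    + intros L sL s1 s2. rewrite (step i hi) in *. unfold Tc in *.
      set (d := composite G as_ n * (composite G as_ (S i))^-1) in *.
      destruct (unf_max (xs i) (xs (S i)) (as_ (S i)) (hF (S i) hi) (sx i ltac:(lia)) (U i hi)
         (conj_set G d^-1 L)) as [c|c].
      * apply subgroup_conj; auto.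
      * rewrite <- (conjVK G d (conj_set G _ (xs i))). apply conj_sub. auto.
      * rewrite <- (conjVK G d (xs (S i))). apply conj_sub. auto.
      * left. rewrite <- (conjKV G d L). apply conj_sub. auto.
      * right. rewrite <- (conjKV G d L). apply conj_sub. auto.
Qed.
End Main2.
Section Back.
Variable G : Group.
Local Notation "x * y" := (gmul G x y).
Local Notation "1" := (gone G).
Local Notation "x ^-1" := (ginv G x) (at level 3).
Variable F : (G -> Prop) -> Prop.
Hypothesis fam : family G F.

Lemma conj_abelian (Y S : G -> Prop) k : (forall x y, Y x -> Y y -> x * y = y * x) -> subgroup G Y ->
  Y k -> subset G S Y -> conj_set G k S = S.
Proof.
  intros ab sY Yk sub. rewrite conjE. apply set_ext. intro y. split; intro h.
  - assert (Yz : Y (k^-1 * y * k)) by auto.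
    assert (e1 : k * (k^-1 * y * k) * k^-1 = (k^-1 * y * k) * k * k^-1) by (rewrite (ab k _ Yk Yz); auto).
    autorewrite with grp in e1, h. rewrite e1. exact h.
  - assert (Yy : Y y) by auto. rewrite gmulA', (ab y k Yy Yk). gsimpl. auto.
Qed.

Lemma dir_back : (forall H, F H -> cyclic_prime_power G H) -> unique_factorisation G F.
Proof.
  intros cpp n xs as_ n' xs' as' c1 c2 e0 en em.
  set (Y := xs n) in *.
  assert (FY : F Y) by (apply c1; auto).
  assert (sY : subgroup G Y) by (apply (fam_sg G F fam); auto).
  assert (tot : total G Y).
  { intros A B sA sB hA hB. eapply cpp_total; eauto. }
  assert (ab : forall x y, Y x -> Y y -> x * y = y * x) by (intros; eapply cpp_abelian; eauto).
  pose proof (chain_good G F fam n xs as_ c1) as g1.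
  pose proof (chain_good G F fam n' xs' as' c2) as g2. rewrite <- en in g2.
  set (c := composite G as_ n) in *. set (c' := composite G as' n') in *.
  unfold mor_eq in em.
  assert (E0 : Tc G as_ n xs 0 = Tc G as' n' xs' 0).
  { unfold Tc. simpl composite. rewrite <- e0. fold c c'.
    replace (c' * 1^-1) with ((c' * c^-1) * (c * 1^-1)) by gsimpl.
    rewrite (conj_comp G (c' * c^-1)). symmetry. apply (conj_abelian Y); auto.
    destruct g1 as [_ [gs _]]. apply (gs 0). lia. }
  destruct (chains_eq G _ _ n n' Y g1 g2 E0 tot) as [<- ET].
  split; auto.
  assert (sx : forall i, i <= n -> subgroup G (xs i)) by (intros; apply (fam_sg G F fam); apply c1; auto).
  assert (sx' : forall i, i <= n -> subgroup G (xs' i)) by (intros; apply (fam_sg G F fam); apply c2; auto).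
  exists (fun i => if Nat.eq_dec i n then 1 else composite G as' i * (composite G as_ i)^-1).
  split; [|split; [|split]].
  - destruct (Nat.eq_dec 0 n); auto. simpl. gsimpl.
  - destruct (Nat.eq_dec n n); auto. congruence.
  - intros i hi. destruct (Nat.eq_dec i n) as [e|ne]; [lia|].
    set (ci := composite G as_ i). set (ci' := composite G as' i).
    assert (E : conj_set G (ci' * ci^-1) (xs i) = xs' i).
    { pose proof (ET i ltac:(lia)) as Ti. unfold Tc in Ti. fold c c' ci ci' in Ti.
      rewrite <- (conjVK G (c * ci^-1) (xs i)), Ti, <- !conj_comp.
      replace (ci' * ci^-1 * (c * ci^-1)^-1 * (c' * ci'^-1))
        with ((c' * ci'^-1)^-1 * (c' * c^-1) * (c' * ci'^-1)) by gsimpl.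
      rewrite (conj_comp G ((c' * ci'^-1)^-1 * (c' * c^-1)) (c' * ci'^-1)), (conj_comp G ((c' * ci'^-1)^-1) (c' * c^-1)).
      rewrite (conj_abelian Y _ (c' * c^-1)); auto.
      + apply conjVK.
      + destruct g2 as [_ [gs _]]. apply (gs i). lia. }
    apply is_iso_iff; auto. apply sx; lia. apply sx'; lia.
    unfold is_mor. rewrite E. split; intros x hx; auto.
  - intros i hi. destruct i as [|j]; [lia|]. replace (S j - 1) with j by lia.
    destruct (Nat.eq_dec j n) as [e|ne]; [lia|].
    unfold mor_eq. simpl composite.
    destruct (Nat.eq_dec (S j) n) as [e|ne'].
    + subst n. unfold c, c' in em. simpl composite in em. fold Y.
      rewrite <- en.
      apply (sg_eq G Y ((as' (S j) * composite G as' j * (as_ (S j) * composite G as_ j)^-1)^-1)); [gsimpl|].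
      apply sgV; auto.
    + apply (sg_eq G (xs' (S j)) 1); [gsimpl|]. apply sg1; apply sx'; lia.
Qed.
End Back.
Section Fwd.
Variable G : Group.
Local Notation "x * y" := (gmul G x y).
Local Notation "1" := (gone G).
Local Notation "x ^-1" := (ginv G x) (at level 3).
Variable F : (G -> Prop) -> Prop.
Hypothesis fam : family G F.
Hypothesis fin : forall H, F H -> finite_set G H.

Local Notation fsg := (fam_sg G F fam).

Lemma unf_of_cover Z Y : F Y -> subgroup G Z -> subset G Z Y -> ~ subset G Y Z ->
  (forall L, subgroup G L -> subset G Z L -> subset G L Y -> subset G L Z \/ subset G Y L) ->
  unfactorisable G F Z Y 1.
Proof.
  intros FY sZ ZY nYZ cov. assert (sY : subgroup G Y) by (apply fsg; auto).
  split; [|split].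
  - unfold is_mor. rewrite conj1. auto.
  - intro i. apply is_iso_iff in i; auto. destruct i as [_ i]. rewrite conj1 in i. auto.
  - intros M a b FM ma mb me. assert (sM : subgroup G M) by (apply fsg; auto).
    unfold is_mor, mor_eq in *.
    assert (Ycc : Y (b * a)). { apply sgVr; auto. eapply sg_eq; [|exact me]. gsimpl. }
    set (L := conj_set G (b * a)^-1 (conj_set G b M)).
    assert (sL : subgroup G L) by (repeat apply subgroup_conj; auto).
    assert (ZL : subset G Z L).
    { unfold L. rewrite <- (conjVK G (b * a) Z) at 1. apply conj_sub. rewrite conj_comp. apply conj_sub. auto. }
    assert (LY : subset G L Y).
    { unfold L. rewrite <- (conj_in G Y (b * a)^-1 sY). apply conj_sub. auto. apply sgV; auto. }
    destruct (cov L sL ZL LY) as [c|c].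
    + left. apply is_iso_iff; auto. split; auto.
      unfold L in c. apply (conj_sub G (b * a)) in c. rewrite conjKV, conj_comp in c.
      apply <- conj_sub_iff in c. auto.
    + right. apply is_iso_iff; auto. split; auto.
      unfold L in c. apply (conj_sub G (b * a)) in c. rewrite conjKV, conj_in in c; auto.
Qed.

Lemma nat_max (P : nat -> Prop) B : forall k0, P k0 -> (forall k, P k -> k <= B) ->
  exists k, P k /\ forall k', P k' -> k' <= k.
Proof.
  induction B; intros k0 h0 hb.
  - exists k0. split; auto. intros k' hk. pose proof (hb k' hk). pose proof (hb k0 h0). lia.
  - destruct (classic (P (S B))) as [p|np].
    + exists (S B). split; auto.
    + apply (IHB k0 h0). intros k hk. specialize (hb k hk). destruct (Nat.eq_dec k (S B)); subst; [contradiction|lia].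
Qed.

Definition chainP (n : nat) (xs : nat -> G -> Prop) (Y : G -> Prop) : Prop :=
  xs n = Y /\ (forall i, i <= n -> subgroup G (xs i) /\ subset G (xs i) Y) /\
  (forall i, i < n -> subset G (xs i) (xs (S i))) /\
  (forall i, 1 <= i <= n -> unfactorisable G F (xs (i - 1)) (xs i) 1).

Lemma chain_through N : forall Y, F Y -> has_card G Y N -> forall X W, subgroup G X -> subgroup G W ->
  subset G X W -> subset G W Y ->
  exists n xs j, j <= n /\ xs 0 = X /\ xs j = W /\ chainP n xs Y.
Proof.
  induction N as [N IH] using (well_founded_induction lt_wf).
  intros Y FY hY X W sX sW XW WY. assert (sY : subgroup G Y) by (apply fsg; auto).
  destruct (classic (subset G Y X)) as [YX|nYX].
  - assert (eX : X = Y) by (apply sub_antisym; auto; intros x h; auto).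
    assert (eW : W = Y) by (apply sub_antisym; auto; intros x h; apply XW, YX, h).
    subst X W. exists 0, (fun _ => Y), 0. split; auto. split; auto. split; auto.
    split; auto. split; [intros; split; auto; intros x h; auto|]. split; intros; lia.
  - set (W' := if excluded_middle_informative (subset G Y W) then X else W).
    assert (hW' : subgroup G W' /\ subset G X W' /\ subset G W' Y /\ ~ subset G Y W').
    { unfold W'. destruct (excluded_middle_informative (subset G Y W)).
      - repeat split; auto; try apply sX; intros x h; auto.
      - repeat split; auto; try apply sW; intros x h; auto. }
    destruct hW' as [sW' [XW' [W'Y nYW']]].
    set (P := fun k => exists Z, subgroup G Z /\ subset G W' Z /\ subset G Z Y /\ ~ subset G Y Z /\ has_card G Z k).
    destruct (sub_finite G W' Y N W'Y hY) as [k0 hk0].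
    destruct (nat_max P N k0) as [kZ [[Z [sZ [W'Z [ZY [nYZ hZ]]]]] kmax]].
    { exists W'. split; [auto|split; [intros x h; auto|split; [auto|split; auto]]]. }
    { intros k [Z [_ [_ [ZY [_ hZ]]]]]. eapply card_le; eauto. }
    assert (cov : forall L, subgroup G L -> subset G Z L -> subset G L Y -> subset G L Z \/ subset G Y L).
    { intros L sL ZL LY. destruct (classic (subset G Y L)) as [c|c]; auto. left.
      destruct (sub_finite G L Y N LY hY) as [kL hL].
      apply (card_sub_eq G Z L kZ kL); auto. apply kmax. exists L.
      split; [auto|split; [intros x h; auto|split; [auto|split; auto]]]. }
    assert (uZ : unfactorisable G F Z Y 1) by (apply unf_of_cover; auto).
    assert (FZ : F Z) by (eapply fam_cl; eauto).
    assert (lt : kZ < N) by (eapply card_lt; eauto).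
    assert (ext : forall n xs, xs 0 = X -> chainP n xs Z ->
      chainP (S n) (fun i => if le_lt_dec i n then xs i else Y) Y /\
      (fun i => if le_lt_dec i n then xs i else Y) 0 = X /\
      forall j, j <= n -> (fun i => if le_lt_dec i n then xs i else Y) j = xs j).
    { intros n xs x0 [xn [xsg [xm xu]]]. split; [|split].
      - split; [|split; [|split]].
        + destruct (le_lt_dec (S n) n); [lia|auto].
        + intros i hi. destruct (le_lt_dec i n).
          * destruct (xsg i l) as [a b]. split; auto. intros x h; auto.
          * split; auto. intros x h; auto.
        + intros i hi. destruct (le_lt_dec i n); destruct (le_lt_dec (S i) n); try lia.
          * auto.
          * assert (i = n) by lia. subst i. rewrite xn. auto.
        + intros i hi. destruct (le_lt_dec i n); destruct (le_lt_dec (i - 1) n); try lia.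
          * apply xu. lia.
          * assert (i = S n) by lia. subst i. replace (S n - 1) with n by lia. rewrite xn. auto.
      - simpl. destruct (le_lt_dec 0 n); [auto|lia].
      - intros j hj. destruct (le_lt_dec j n); [auto|lia]. }
    destruct (excluded_middle_informative (subset G Y W)) as [YW|nYW].
    + assert (XX : subset G X X) by (intros x h; auto).
      assert (XZ : subset G X Z).
      { unfold W' in W'Z. destruct (excluded_middle_informative (subset G Y W)); [|contradiction].
        auto. }
      destruct (IH kZ lt Z FZ hZ X X sX sX XX XZ) as [n [xs [j [_ [x0 [_ cp]]]]]].
      destruct (ext n xs x0 cp) as [cp' [e0 _]].
      exists (S n), (fun i => if le_lt_dec i n then xs i else Y), (S n). split; auto. split; auto.
      split; auto. destruct (le_lt_dec (S n) n); [lia|]. apply sub_antisym; auto.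
    + assert (W'W : W' = W) by (unfold W'; destruct (excluded_middle_informative (subset G Y W)); [contradiction|auto]).
      rewrite W'W in W'Z.
      destruct (IH kZ lt Z FZ hZ X W sX sW XW W'Z) as [n [xs [j [hj [x0 [xj cp]]]]]].
      destruct (ext n xs x0 cp) as [cp' [e0 ej]].
      exists (S n), (fun i => if le_lt_dec i n then xs i else Y), j. split; auto. split; auto.
      split; auto. rewrite ej; auto.
Qed.
End Fwd.
Section Fwd2.
Variable G : Group.
Local Notation "x * y" := (gmul G x y).
Local Notation "1" := (gone G).
Local Notation "x ^-1" := (ginv G x) (at level 3).
Local Notation gp := (gpow G).
Variable F : (G -> Prop) -> Prop.
Hypothesis fam : family G F.
Hypothesis fin : forall H, F H -> finite_set G H.
Local Notation fsg := (fam_sg G F fam).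

Lemma composite_one n : composite G (fun _ => 1) n = 1.
Proof. induction n; simpl; auto. rewrite IHn. apply gmul1. Qed.

Lemma chainP_unf n xs Y : F Y -> chainP G F n xs Y -> unf_chain G F n xs (fun _ => 1).
Proof.
  intros FY [xn [xs_ [xm xu]]]. split.
  - intros i hi. destruct (xs_ i hi). eapply fam_cl; eauto.
  - intros i hi. apply xu; auto.
Qed.

Lemma chain_mono n xs Y : chainP G F n xs Y -> forall i j, i <= j -> j <= n -> subset G (xs i) (xs j).
Proof.
  intros [_ [_ [xm _]]] i j hij. induction j; intros hj.
  - assert (i = 0) by lia. subst. intros x h; auto.
  - destruct (Nat.eq_dec i (S j)) as [->|ne]. intros x h; auto.
    intros x h. apply xm. lia. apply IHj; auto; lia.
Qed.

Lemma uf_sub n1 xs1 n2 xs2 Y : unique_factorisation G F -> F Y ->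
  chainP G F n1 xs1 Y -> chainP G F n2 xs2 Y -> xs1 0 = xs2 0 ->
  n1 = n2 /\ forall i, i <= n1 -> subset G (xs1 i) (xs2 i).
Proof.
  intros uf FY c1 c2 e0.
  destruct (uf n1 xs1 (fun _ => 1) n2 xs2 (fun _ => 1) (chainP_unf _ _ _ FY c1) (chainP_unf _ _ _ FY c2) e0)
    as [<- [h [h0 [hn [hiso hme]]]]].
  - destruct c1 as [-> _], c2 as [-> _]. auto.
  - rewrite !composite_one. unfold mor_eq. destruct c1 as [-> _].
    autorewrite with grp. apply sg1, fsg; auto.
  - split; auto.
    destruct c2 as [x2n [x2s [x2m x2u]]]. destruct c1 as [x1n [x1s [x1m x1u]]].
    assert (hin : forall i, i <= n1 -> xs2 i (h i)).
    { induction i; intro hi. rewrite h0. apply sg1. apply x2s. lia.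
      specialize (hme (S i) ltac:(lia)). replace (S i - 1) with i in hme by lia. unfold mor_eq in hme.
      apply (sg_eq G (xs2 (S i)) ((h (S i) * 1 * (1 * h i)^-1) * h i)); [gsimpl|].
      apply sgM. apply x2s; lia. auto. apply x2m. lia. apply IHi. lia. }
    intros i hi. destruct (Nat.eq_dec i 0) as [->|n0]. rewrite e0. intros x hx; auto.
    destruct (Nat.eq_dec i n1) as [->|nn]. rewrite x1n, x2n. intros x hx; auto.
    destruct (hiso i ltac:(lia)) as [hm _]. unfold is_mor in hm. rewrite conjE in hm.
    intros x hx. specialize (hm (h i * x * (h i)^-1)).
    cbv beta in hm.
    assert (e : (h i)^-1 * (h i * x * (h i)^-1) * h i = x) by gsimpl. rewrite e in hm.
    specialize (hm hx).
    apply (sg_eq G (xs2 i) ((h i)^-1 * (h i * x * (h i)^-1) * h i)); [gsimpl|].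
    pose proof (hin i hi). apply sgM; [apply x2s; lia| |auto]. apply sgM; [apply x2s; lia| |auto].
    apply sgV; auto. apply x2s; lia.
Qed.

Lemma uf_total H : unique_factorisation G F -> F H -> total G H.
Proof.
  intros uf FH A B sA sB hA hB. destruct (fin H FH) as [N hN].
  apply NNPP. intro nc.
  set (D := fun x => A x /\ B x).
  assert (sD : subgroup G D) by (apply subgroup_inter; auto).
  destruct (chain_through G F fam N H FH hN D A sD sA) as [n1 [xs1 [j1 [hj1 [e01 [ej1 c1]]]]]];
    auto. intros x [a _]; auto.
  destruct (chain_through G F fam N H FH hN D B sD sB) as [n2 [xs2 [j2 [hj2 [e02 [ej2 c2]]]]]];
    auto. intros x [_ b]; auto.
  destruct (uf_sub n1 xs1 n2 xs2 H uf FH c1 c2 ltac:(congruence)) as [<- s12].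
  destruct (uf_sub n1 xs2 n1 xs1 H uf FH c2 c1 ltac:(congruence)) as [_ s21].
  apply nc. destruct (Nat.le_ge_cases j1 j2).
  - left. rewrite <- ej1, <- ej2. intros x hx. eapply chain_mono; [exact c2| | |apply s12]; eauto.
  - right. rewrite <- ej1, <- ej2. intros x hx. eapply chain_mono; [exact c1| | |apply s21]; eauto.
Qed.

Lemma cyc_self g : cyc G g g.
Proof. exists (S O). simpl. symmetry. apply mulr1. Qed.

Lemma total_side H N g p q u v : subgroup G H -> has_card G (cyc G g) N -> H = cyc G g -> total G H ->
  prime (Z.of_nat p) -> prime (Z.of_nat q) -> N = (u * p)%nat -> N = (v * q)%nat ->
  subset G (cyc G (gp g u)) (cyc G (gp g v)) -> p = q.
Proof.
  intros sH hc eH tot pp pq eu ev sub.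
  destruct (cyclic_order G g N hc) as [hN [gN gdiv]].
  destruct (sub _ (cyc_self (gp g u))) as [t et].
  assert (e : gp g (u * q) = 1).
  { rewrite gpow_mul, et, <- !gpow_mul.
    replace (v * (t * q))%nat with (N * t)%nat by (rewrite ev; lia).
    rewrite gpow_mul, gN. apply gpow_one. }
  destruct (gdiv _ e) as [z ez].
  apply (prime_cancel p q u); auto. nia. exists z. lia.
Qed.

Lemma total_cpp H N : subgroup G H -> has_card G H N -> total G H -> cyclic_prime_power G H.
Proof.
  intros sH hN tot.
  assert (cs : forall h, H h -> subgroup G (cyc G h) /\ subset G (cyc G h) H).
  { intros h hh. destruct (finite_order G H N h) as [e [he ge]]; auto.
    intro m. apply sg_gpow; auto.
    split. eapply cyc_subgroup; eauto. intros x [m ->]. apply sg_gpow; auto. }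
  assert (mx : forall l, exists g, H g /\ forall x, In x l -> H x -> subset G (cyc G x) (cyc G g)).
  { induction l as [|y l [g [hg IH]]].
    - exists 1. split. apply sg1; auto. intros x [].
    - destruct (classic (H y)) as [hy|hy].
      + destruct (cs y hy) as [sy1 sy2]. destruct (cs g hg) as [sg1' sg2].
        destruct (tot _ _ sy1 sg1' sy2 sg2) as [c|c].
        * exists g. split; auto. intros x [<-|hx] Hx; auto.
        * exists y. split; auto. intros x [<-|hx] Hx. intros z hz; auto.
          intros z hz. apply c, (IH x hx Hx), hz.
      + exists g. split; auto. intros x [<-|hx] Hx; [contradiction|auto]. }
  destruct hN as [l [nl [ll hl]]] eqn:hN0.
  destruct (mx l) as [g [hg gmax]].
  assert (eH : H = cyc G g).
  { apply sub_antisym. intros x hx. apply (gmax x); auto. apply hl; auto. apply cyc_self.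
    apply cs; auto. }
  assert (hc : has_card G (cyc G g) N) by (rewrite <- eH; auto).
  split.
  - exists g. rewrite eH. intro x. tauto.
  - destruct (cyclic_order G g N hc) as [hNp _].
    destruct (one_prime_pow N) as [p [k [pp ek]]]; [lia| |].
    + intros p q pp pq [u eu] [v ev].
      assert (su : subgroup G (cyc G (gp g u)) /\ subset G (cyc G (gp g u)) H)
        by (apply cs; rewrite eH; exists u; auto).
      assert (sv : subgroup G (cyc G (gp g v)) /\ subset G (cyc G (gp g v)) H)
        by (apply cs; rewrite eH; exists v; auto).
      destruct su, sv.
      destruct (tot _ _ H0 H2 H1 H3) as [c|c].
      * apply (total_side H N g p q u v); auto.
      * symmetry. apply (total_side H N g q p v u); auto.
    + exists p, k. split; auto. rewrite <- ek. auto.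
Qed.
End Fwd2.

Theorem proposition6p33 (G : Group) (F : (G -> Prop) -> Prop) :
  family G F -> (forall H, F H -> finite_set G H) ->
  (unique_factorisation G F <-> forall H, F H -> cyclic_prime_power G H).
Proof.
  intros fam fin. split.
  - intros uf H FH. destruct (fin H FH) as [N hN].
    apply (total_cpp G H N); auto. apply (fam_sg G F fam); auto.
    apply (uf_total G F fam fin); auto.
  - apply dir_back; auto.
Qed.
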